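(* Let $\pi^{(d)}$ be $\tau^{(d)}$ (with $d\ge6$) or $\sigma^{(d)}$ (with $d\ge8$). If $\beta\le d$ and $\beta\equiv 2\pmod 4$, then $v=\sum_{\alpha=1}^{\beta}(-1)^\alpha e_\alpha\in\{e_\alpha\}_{\alpha\in\mathcal{A}}^{\Omega^{(d)}}$.
   Context: Alphabet $\mathcal{A}=\{1,\dots,d\}$; $\tau^{(d)}$ has top row $1,2,\dots,d$ and bottom row $d,d-1,\dots,6,3,2,5,4,1$; $\sigma^{(d)}$ has top row $1,\dots,d$ and bottom row $d,d-1,\dots,8,3,2,7,6,5,4,1$ (rows list letters in order of $\pi_{\mathrm t}$, $\pi_{\mathrm b}$). $\Omega^{(d)}=\Omega_{\pi^{(d)}}$ where $(\Omega_\pi)_{\alpha\beta}=+1$ if $\pi_{\mathrm t}(\alpha)<\pi_{\mathrm t}(\beta)$ and $\pi_{\mathrm b}(\alpha)>\pi_{\mathrm b}(\beta)$, $-1$ if the reverse inequalities hold, $0$ otherwise; $\langle u,v\rangle=u\Omega^{(d)}v^{\intercal}$ on $\mathbb{Z}^{\mathcal{A}}$, with canonical basis $e_\alpha$. A set $X\subseteq\mathbb{Z}^{\mathcal{A}}$ is $\Omega^{(d)}$-closed if $X=-X$ and for all $v,w\in X$ with $\langle v,w\rangle=1$ one has $v+w,v-w\in X$; $Y^{\Omega^{(d)}}$ denotes the smallest $\Omega^{(d)}$-closed set containing $Y$. *)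

(* Defs.v *)
From mathcomp Require Import all_boot all_order all_algebra.
Unset Implicit Arguments. Unset Strict Implicit. Unset Printing Implicit Defensive.
Import Order.TTheory GRing.Theory Num.Theory.
Local Open Scope ring_scope.

(* Letters of the alphabet {1,...,d} are represented by i : 'I_d, standing
   for the letter i.+1.  The top row of both permutations is 1,2,...,d, so
   pi_t(a) = a.  Below, pib d a is the position (1-based) of the letter a
   in the bottom row. *)

(* tau^(d): bottom row d, d-1, ..., 6, 3, 2, 5, 4, 1 *)
Definition pib_tau (d a : nat) : nat :=
  match a with
  | 1 => d
  | 2 => d - 3
  | 3 => d - 4
  | 4 => d - 1
  | 5 => d - 2
  | _ => d.+1 - a
  end%N.

(* sigma^(d): bottom row d, d-1, ..., 8, 3, 2, 7, 6, 5, 4, 1 *)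
Definition pib_sigma (d a : nat) : nat :=
  match a with
  | 1 => d
  | 2 => d - 5
  | 3 => d - 6
  | 4 => d - 1
  | 5 => d - 2
  | 6 => d - 3
  | 7 => d - 4
  | _ => d.+1 - a
  end%N.

Definition omega_entry (pib : nat -> nat) (a b : nat) : int :=
  if (a < b)%N && (pib b < pib a)%N then 1
  else if (b < a)%N && (pib a < pib b)%N then -1
  else 0.

Definition Omega (pib : nat -> nat -> nat) (d : nat) : 'M[int]_d :=
  \matrix_(i < d, j < d) omega_entry (pib d) i.+1 j.+1.

Definition form (pib : nat -> nat -> nat) (d : nat) (u v : 'rV[int]_d) : int :=
  (u *m Omega pib d *m v^T) 0 0.

Definition Omega_closed (pib : nat -> nat -> nat) (d : nat)
    (X : 'rV[int]_d -> Prop) : Prop :=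
  (forall v, X v <-> X (- v)) /\
  (forall v w, X v -> X w -> form pib d v w = 1 -> X (v + w) /\ X (v - w)).

Definition Omega_closure (pib : nat -> nat -> nat) (d : nat)
    (Y : 'rV[int]_d -> Prop) (v : 'rV[int]_d) : Prop :=
  forall X, Omega_closed pib d X -> (forall y, Y y -> X y) -> X v.

Definition e_vec (d : nat) (i : 'I_d) : 'rV[int]_d := delta_mx 0 i.

Definition canonical_basis (d : nat) (v : 'rV[int]_d) : Prop :=
  exists i : 'I_d, v = e_vec d i.

Definition alt_vec (d beta : nat) : 'rV[int]_d :=
  \row_(i < d) (if (i.+1 <= beta)%N then (-1) ^+ i.+1 else 0).

(* Main.v *)
Require Import Defs.
From mathcomp Require Import all_boot all_order all_algebra.
From mathcomp Require Import zify.
Import Defs.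
Import Order.TTheory GRing.Theory Num.Theory.
Local Open Scope ring_scope.

Definition E (d a : nat) : 'rV[int]_d := \row_(i < d) (if i.+1 == a then 1 else 0).

Lemma formDl p d (u v w : 'rV[int]_d) : form p d (u + v) w = form p d u w + form p d v w.
Proof. by rewrite /form !mulmxDl mxE. Qed.
Lemma formDr p d (u v w : 'rV[int]_d) : form p d u (v + w) = form p d u v + form p d u w.
Proof. by rewrite /form raddfD /= mulmxDr mxE. Qed.
Lemma formNl p d (u w : 'rV[int]_d) : form p d (- u) w = - form p d u w.
Proof. by rewrite /form !mulNmx mxE. Qed.
Lemma formNr p d (u w : 'rV[int]_d) : form p d u (- w) = - form p d u w.
Proof. by rewrite /form raddfN /= mulmxN mxE. Qed.
Lemma formBl p d (u v w : 'rV[int]_d) : form p d (u - v) w = form p d u w - form p d v w.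
Proof. by rewrite formDl formNl. Qed.
Lemma formBr p d (u v w : 'rV[int]_d) : form p d u (v - w) = form p d u v - form p d u w.
Proof. by rewrite formDr formNr. Qed.

Lemma omega_anti (f : nat -> nat) a b : omega_entry f a b = - omega_entry f b a.
Proof.
rewrite /omega_entry.
repeat (case: ifP => /=); intros; lia.
Qed.

Lemma Omega_tr p d : (Omega p d)^T = - Omega p d.
Proof. by apply/matrixP => i j; rewrite !mxE omega_anti. Qed.

Lemma form_anti p d (u w : 'rV[int]_d) : form p d u w = - form p d w u.
Proof.
rewrite /form.
have h : forall (A : 'M[int]_1), A 0 0 = (A^T) 0 0 by move=> A; rewrite mxE.
rewrite [in RHS](h (w *m _ *m _)).
by rewrite !trmx_mul trmxK Omega_tr mulNmx mulmxN mulmxA [in RHS]mxE opprK.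
Qed.

Lemma form_self p d (u : 'rV[int]_d) : form p d u u = 0.
Proof. have := form_anti p d u u. lia. Qed.

Lemma E_ord d a (H : (a.-1 < d)%N) : (0 < a)%N -> E d a = e_vec d (Ordinal H).
Proof.
move=> a0; apply/rowP => i; rewrite !mxE /=.
have -> : (i.+1 == a) = (i == Ordinal H) by rewrite -val_eqE /=; lia.
by case: (i == Ordinal H).
Qed.

Lemma E_basis d a : (0 < a <= d)%N -> canonical_basis d (E d a).
Proof.
move=> /andP [a0 ad]. have H : (a.-1 < d)%N by lia.
by exists (Ordinal H); rewrite (E_ord _ _ H).
Qed.

Lemma formE p d a b : (0 < a <= d)%N -> (0 < b <= d)%N ->
  form p d (E d a) (E d b) = omega_entry (p d) a b.
Proof.
move=> /andP [a0 ad] /andP [b0 bd].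
have Ha : (a.-1 < d)%N by lia. have Hb : (b.-1 < d)%N by lia.
rewrite (E_ord _ _ Ha) // (E_ord _ _ Hb) // /form /e_vec.
rewrite -rowE trmx_delta -colE !mxE /=.
by rewrite !prednK.
Qed.

Definition omT (a b : nat) : int :=
  if (a < b)%N then (if ((a == 2) || (a == 3)) && ((b == 4) || (b == 5)) then 0 else 1)
  else if (b < a)%N then (if ((b == 2) || (b == 3)) && ((a == 4) || (a == 5)) then 0 else -1)
  else 0.
Definition omS (a b : nat) : int :=
  if (a < b)%N then (if ((a == 2) || (a == 3)) && (4 <= b <= 7)%N then 0 else 1)
  else if (b < a)%N then (if ((b == 2) || (b == 3)) && (4 <= a <= 7)%N then 0 else -1)
  else 0.

Lemma tabT d a b : (6 <= d)%N -> (0 < a <= d)%N -> (0 < b <= d)%N ->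
  omega_entry (pib_tau d) a b = omT a b.
Proof.
case: a => [|[|[|[|[|[|a]]]]]]; case: b => [|[|[|[|[|[|b]]]]]];
rewrite /omT /omega_entry /pib_tau /=; repeat (case: ifP => /=); intros; lia.
Qed.

Lemma tabS d a b : (8 <= d)%N -> (0 < a <= d)%N -> (0 < b <= d)%N ->
  omega_entry (pib_sigma d) a b = omS a b.
Proof.
case: a => [|[|[|[|[|[|[|[|a]]]]]]]]; case: b => [|[|[|[|[|[|[|[|b]]]]]]]];
rewrite /omS /omega_entry /pib_sigma /=; repeat (case: ifP => /=); intros; lia.
Qed.

Definition Hyp (pib : nat -> nat -> nat) d :=
  (pib = pib_tau /\ (6 <= d)%N) \/ (pib = pib_sigma /\ (8 <= d)%N).

Lemma om_gen pib d a b : Hyp pib d -> (0 < a)%N -> (a < b)%N -> (b <= d)%N ->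
  a != 2%N -> a != 3%N -> omega_entry (pib d) a b = 1.
Proof.
move=> [[-> hd]|[-> hd]] a0 ab bd a2 a3.
- rewrite tabT //; try lia. rewrite /omT; repeat (case: ifP => /=); intros; lia.
- rewrite tabS //; try lia. rewrite /omS; repeat (case: ifP => /=); intros; lia.
Qed.

Lemma om23 pib d a : Hyp pib d -> (4 <= a <= d)%N ->
  omega_entry (pib d) a 2 = omega_entry (pib d) a 3.
Proof.
move=> [[-> hd]|[-> hd]] ad.
- rewrite !tabT //; try lia. rewrite /omT; repeat (case: ifP => /=); intros; lia.
- rewrite !tabS //; try lia. rewrite /omS; repeat (case: ifP => /=); intros; lia.
Qed.

Lemma fpos pib d a b : Hyp pib d -> (0 < a)%N -> (a < b)%N -> (b <= d)%N ->
  a != 2%N -> a != 3%N -> form pib d (E d a) (E d b) = 1.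
Proof. move=> *; rewrite formE ?(om_gen _ _ a b) //; lia. Qed.

Lemma fneg pib d a b : Hyp pib d -> (0 < a)%N -> (a < b)%N -> (b <= d)%N ->
  a != 2%N -> a != 3%N -> form pib d (E d b) (E d a) = -1.
Proof. by move=> *; rewrite form_anti (fpos pib d a b). Qed.

Lemma f23 pib d a : Hyp pib d -> (4 <= a <= d)%N ->
  form pib d (E d a) (E d 2) = form pib d (E d a) (E d 3).
Proof.
move=> H ad; have hd : (4 <= d)%N by case: H => [[_ ?]|[_ ?]]; lia.
rewrite !formE ?(om23 _ _ a) //; lia.
Qed.

Lemma clD pib d X (u w : 'rV[int]_d) : Omega_closed pib d X -> X u -> X w ->
  form pib d u w = 1 -> X (u + w).
Proof. by move=> [_ H] xu xw f; case: (H u w xu xw f). Qed.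
Lemma clB pib d X (u w : 'rV[int]_d) : Omega_closed pib d X -> X u -> X w ->
  form pib d u w = 1 -> X (u - w).
Proof. by move=> [_ H] xu xw f; case: (H u w xu xw f). Qed.
Lemma clN pib d X (u : 'rV[int]_d) : Omega_closed pib d X -> X u -> X (- u).
Proof. by move=> [H _] xu; apply: (proj1 (H u)). Qed.

Arguments clB {pib d X u w}.
Arguments clD {pib d X u w}.
Arguments clN {pib d X u}.

Fixpoint sgn (i j : nat) : int :=
  match i, j with 0, 0 => 0 | 0, S _ => 1 | S _, 0 => -1 | S i', S j' => sgn i' j' end.
Definition vj (j : nat) : int := match j with 0 | 1 => 1 | _ => 0 end.

Lemma sgnP i j : sgn i j = if (i < j)%N then 1 else if (j < i)%N then -1 else 0.
Proof. elim: i j => [|i IH] [|j] //=. Qed.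

Definition P pib d (X : 'rV[int]_d -> Prop) m :=
  X (alt_vec d (m + 1)) /\ form pib d (E d 1) (alt_vec d (m + 1)) = 1 /\
  (forall j, (j <= 1)%N -> form pib d (E d (m + j)) (alt_vec d (m + 1)) = 1) /\
  (forall a, (m + 1 < a <= d)%N -> form pib d (E d a) (alt_vec d (m + 1)) = 0).

Lemma sgpow n : (-1) ^+ n = (if odd n then -1 else 1 : int).
Proof. by rewrite -signr_odd; case: (odd n). Qed.

Lemma alt_step d m : odd m -> alt_vec d (m + 5) =
  alt_vec d (m + 1) - E d (m + 2) + E d (m + 3) - E d (m + 4) + E d (m + 5).
Proof.
move=> om; apply/rowP => i; rewrite !mxE !sgpow.
repeat (case: ifP => /=); intros; lia.
Qed.

Ltac fexp := rewrite ?(formDl, formNl, formDr, formNr).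

Lemma stepP pib d X m : Hyp pib d -> Omega_closed pib d X ->
  (forall y, canonical_basis d y -> X y) -> odd m -> (5 <= m)%N -> (m + 5 <= d)%N ->
  P pib d X m -> P pib d X (m + 4).
Proof.
move=> H HX Hb om m5 md [XV [h1V [hnV hzV]]].
set V := alt_vec d (m + 1) in XV h1V hnV hzV.
have XE : forall a, (0 < a <= d)%N -> X (E d a) by move=> a ha; apply/Hb/E_basis.
have hEE : forall i j, (i <= 5)%N -> (j <= 5)%N ->
    form pib d (E d (m + i)) (E d (m + j)) = sgn i j.
  move=> i j hi hj; rewrite sgnP.
  case: ltngtP => ij.
  - rewrite (fpos pib d) //; lia.
  - rewrite (fneg pib d (m + j)) //; lia.
  - by rewrite ij form_self.
have h1E : forall j, (j <= 5)%N -> form pib d (E d 1) (E d (m + j)) = 1.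
  by move=> j hj; rewrite (fpos pib d) //; lia.
have hE1 : forall j, (j <= 5)%N -> form pib d (E d (m + j)) (E d 1) = -1.
  by move=> j hj; rewrite (fneg pib d 1) //; lia.
have h11 : form pib d (E d 1) (E d 1) = 0 by rewrite form_self.
have hEV : forall j, (j <= 5)%N -> form pib d (E d (m + j)) V = vj j.
  move=> j hj; case: (leqP j 1) => hj1.
    by rewrite hnV //; case: j hj hj1 => [|[|]].
  rewrite hzV; last lia.
  by case: j hj hj1 => [|[|]].
have hVE : forall j, (j <= 5)%N -> form pib d V (E d (m + j)) = - vj j.
  by move=> j hj; rewrite form_anti hEV.
have hV1 : form pib d V (E d 1) = -1 by rewrite form_anti h1V.
have hVV : form pib d V V = 0 by rewrite form_self.
have X1 : X (E d 1) by apply: XE; lia.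
have XF : forall j, (j <= 5)%N -> X (E d (m + j)) by move=> j hj; apply: XE; lia.
have a1 := clB HX (XF 1%N isT) (XF 5%N isT) ltac:(fexp; rewrite ?hEE ?h1E ?hE1 ?hEV ?hVE ?h11 ?hV1 ?hVV ?h1V //=).
have a2 := clD HX X1 (XF 2%N isT) ltac:(fexp; rewrite ?hEE ?h1E ?hE1 ?hEV ?hVE ?h11 ?hV1 ?hVV ?h1V //=).
have a3 := clD HX (XF 0%N isT) XV ltac:(fexp; rewrite ?hEE ?h1E ?hE1 ?hEV ?hVE ?h11 ?hV1 ?hVV ?h1V //=).
have a4 := clB HX a2 a3 ltac:(fexp; rewrite ?hEE ?h1E ?hE1 ?hEV ?hVE ?h11 ?hV1 ?hVV ?h1V //=).
have a5 := clD HX a1 a4 ltac:(fexp; rewrite ?hEE ?h1E ?hE1 ?hEV ?hVE ?h11 ?hV1 ?hVV ?h1V //=).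
have a6 := clD HX (XF 1%N isT) XV ltac:(fexp; rewrite ?hEE ?h1E ?hE1 ?hEV ?hVE ?h11 ?hV1 ?hVV ?h1V //=).
have a7 := clB HX a6 (XF 4%N isT) ltac:(fexp; rewrite ?hEE ?h1E ?hE1 ?hEV ?hVE ?h11 ?hV1 ?hVV ?h1V //=).
have a8 := clD HX X1 (XF 3%N isT) ltac:(fexp; rewrite ?hEE ?h1E ?hE1 ?hEV ?hVE ?h11 ?hV1 ?hVV ?h1V //=).
have a9 := clB HX a8 a3 ltac:(fexp; rewrite ?hEE ?h1E ?hE1 ?hEV ?hVE ?h11 ?hV1 ?hVV ?h1V //=).
have a10 := clD HX a7 a9 ltac:(fexp; rewrite ?hEE ?h1E ?hE1 ?hEV ?hVE ?h11 ?hV1 ?hVV ?h1V //=).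
have a11 := clB HX a5 a10 ltac:(fexp; rewrite ?hEE ?h1E ?hE1 ?hEV ?hVE ?h11 ?hV1 ?hVV ?h1V //=).
have a12 := clN HX a11.
rewrite /P.
have -> : (m + 4 + 1 = m + 5)%N by lia.
rewrite alt_step //.
split; [|split; [|split]].
- rewrite -/V; move: a12; congr X.
  by apply/rowP => i; rewrite !mxE; lia.
- rewrite -/V; fexp; rewrite ?hEE ?h1E ?hE1 ?hEV ?hVE ?h11 ?hV1 ?hVV ?h1V //=.
- rewrite -/V => j; case: j => [|[|//]] _.
  + rewrite addn0; fexp; rewrite ?hEE ?h1E ?hE1 ?hEV ?hVE ?h11 ?hV1 ?hVV ?h1V //=.
  + rewrite -addnA; fexp; rewrite ?hEE ?h1E ?hE1 ?hEV ?hVE ?h11 ?hV1 ?hVV ?h1V //=.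
- rewrite -/V => a ha; fexp.
  rewrite hzV; last lia.
  rewrite (fneg pib d (m + 2) a) ?(fneg pib d (m + 3) a) ?(fneg pib d (m + 4) a)
    ?(fneg pib d (m + 5) a) //; lia.
Qed.

Lemma alt6 d : alt_vec d (5 + 1) =
  - E d 1 + E d 2 - E d 3 + E d 4 - E d 5 + E d 6.
Proof.
apply/rowP => i; rewrite !mxE !sgpow.
repeat (case: ifP => /=); intros; lia.
Qed.

Lemma alt2 d : alt_vec d 2 = - (E d 1 - E d 2).
Proof.
apply/rowP => i; rewrite !mxE !sgpow.
repeat (case: ifP => /=); intros; lia.
Qed.

Lemma baseP pib d X : Hyp pib d -> Omega_closed pib d X ->
  (forall y, canonical_basis d y -> X y) -> P pib d X 5.
Proof.
move=> H HX Hb.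
have XE : forall a, (0 < a <= d)%N -> X (E d a) by move=> a ha; apply/Hb/E_basis.
have hd : (6 <= d)%N by case: H => [[_ ?]|[_ ?]]; lia.
have XEk : forall a, (0 < a <= 6)%N -> X (E d a) by move=> a ha; apply: XE; lia.
split; [|split; [|split]].
- rewrite alt6. case: (H) => [[Hp _]|[Hp hd8]]; subst pib.
  + have fT : forall a b, (0 < a <= 6)%N -> (0 < b <= 6)%N ->
        form pib_tau d (E d a) (E d b) = omT a b.
      by move=> a b ha hb; rewrite formE ?tabT //; lia.
    have b1 := clD HX (XEk 2%N isT) (XEk 6%N isT) ltac:(fexp; rewrite ?fT //).
    have b2 := clB HX (XEk 5%N isT) b1 ltac:(fexp; rewrite ?fT //).
    have b3 := clD HX (XEk 1%N isT) (XEk 3%N isT) ltac:(fexp; rewrite ?fT //).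
    have b4 := clB HX b3 (XEk 4%N isT) ltac:(fexp; rewrite ?fT //).
    have b5 := clD HX b2 b4 ltac:(fexp; rewrite ?fT //).
    have b6 := clN HX b5.
    move: b6; congr X.
    by apply/rowP => i; rewrite !mxE; lia.
  + have fS : forall a b, (0 < a <= 8)%N -> (0 < b <= 8)%N ->
        form pib_sigma d (E d a) (E d b) = omS a b.
      by move=> a b ha hb; rewrite formE ?tabS //; lia.
    have XE8 : forall a, (0 < a <= 8)%N -> X (E d a) by move=> a ha; apply: XE; lia.
    have b1 := clB HX (XE8 3%N isT) (XE8 8%N isT) ltac:(fexp; rewrite ?fS //).
    have b2 := clB HX b1 (XE8 6%N isT) ltac:(fexp; rewrite ?fS //).
    have b3 := clD HX (XE8 5%N isT) (XE8 8%N isT) ltac:(fexp; rewrite ?fS //).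
    have b4 := clB HX (XE8 1%N isT) (XE8 2%N isT) ltac:(fexp; rewrite ?fS //).
    have b5 := clB HX b4 (XE8 4%N isT) ltac:(fexp; rewrite ?fS //).
    have b6 := clD HX b3 b5 ltac:(fexp; rewrite ?fS //).
    have b7 := clD HX b2 b6 ltac:(fexp; rewrite ?fS //).
    have b8 := clN HX b7.
    move: b8; congr X.
    by apply/rowP => i; rewrite !mxE; lia.
- rewrite alt6; case: (H) => [[Hp _]|[Hp hd8]]; subst pib; fexp.
  + by rewrite ?formE ?tabT //; lia.
  + by rewrite ?formE ?tabS //; lia.
- move=> j; case: j => [|[|//]] _; rewrite alt6 /=;
  case: (H) => [[Hp _]|[Hp hd8]]; subst pib; fexp.
  + by rewrite ?formE ?tabT //; lia.
  + by rewrite ?formE ?tabS //; lia.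
  + by rewrite ?formE ?tabT //; lia.
  + by rewrite ?formE ?tabS //; lia.
- move=> a ha; rewrite alt6; fexp.
  rewrite (f23 pib d a) //; last lia.
  rewrite (fneg pib d 1 a) ?(fneg pib d 4 a)
    ?(fneg pib d 5 a) ?(fneg pib d 6 a) //; lia.
Qed.

Theorem lemma4p2 (pib : nat -> nat -> nat) (d beta : nat) :
  ((pib = pib_tau /\ (6 <= d)%N) \/ (pib = pib_sigma /\ (8 <= d)%N)) ->
  (beta <= d)%N -> (beta %% 4 = 2)%N ->
  Omega_closure pib d (canonical_basis d) (alt_vec d beta).
Proof.
move=> H bd b4 X HX Hb.
have hd : (6 <= d)%N by case: H => [[_ ?]|[_ ?]]; lia.
have XE : forall a, (0 < a <= d)%N -> X (E d a) by move=> a ha; apply/Hb/E_basis.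
case: (eqVneq beta 2%N) => [->|b2].
  rewrite alt2; apply: (clN HX); apply: (clB HX).
  - by apply: XE; lia.
  - by apply: XE; lia.
  - by rewrite (fpos pib d) //; lia.
have key : forall k, (4 * k + 6 <= d)%N -> P pib d X (4 * k + 5).
  elim => [|k IH] hk.
    by rewrite muln0 add0n; apply: baseP.
  have -> : (4 * k.+1 + 5 = (4 * k + 5) + 4)%N by lia.
  apply: stepP => //; try lia.
  by apply: IH; lia.
have [k hk] : exists k, beta = (4 * k + 6)%N by exists ((beta - 6) %/ 4)%N; lia.
have hk2 : (4 * k + 6 <= d)%N by lia.
have [XV _] := key k hk2.
by have -> : beta = (4 * k + 5 + 1)%N by lia.
Qed.
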